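(* Let $d\ge1$ and $L\ge2$ be integers, $\Phi\in\mathbb{R}^{d\times d}$, and $W_1,\dots,W_L\in\mathbb{R}^{d\times d}$, with $\mathcal{R}=\tfrac12\|W_{L:1}-\Phi\|_F^2$. Suppose $\|W_l\|_2\le\alpha$ for $l=1,\dots,L-1$ and $\|W_L\|_2\le\beta$, where $\alpha,\beta\ge0$ and, for some $\phi>0$, $1\le\alpha^{2(L-1)}<L\phi^2$ and $\alpha^{2(L-1)}\beta^2<2\phi^2$. For $\eta>0$ let $W_l^+=W_l-\eta\nabla_l\mathcal{R}$, $l=1,\dots,L$, and let $D_l=W_{l+1}^\intercal W_{l+1}-W_lW_l^\intercal$, $D_l^+=(W_{l+1}^+)^\intercal W_{l+1}^+-W_l^+(W_l^+)^\intercal$ for $l=1,\dots,L-1$. Then $$\|D_l^+-D_l\|_2\le8\eta^2\phi^2\mathcal{R}\quad(l=1,\dots,L-2),\qquad\|D_{L-1}^+-D_{L-1}\|_2\le2\eta^2(L+2)\phi^2\mathcal{R}.$$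
   Context: For $l_2\ge l_1$ write $W_{l_2:l_1}=W_{l_2}\cdots W_{l_1}$, empty products being the identity $I$. $\nabla_l\mathcal{R}=W_{L:l+1}^\intercal(W_{L:1}-\Phi)W_{l-1:1}^\intercal$ is the gradient of $\mathcal{R}(W_1,\dots,W_L)=\tfrac12\|W_L\cdots W_1-\Phi\|_F^2$ with respect to $W_l$, evaluated at $(W_1,\dots,W_L)$. $\|\cdot\|_2$ is the spectral norm and $\|\cdot\|_F$ the Frobenius norm. *)

(* Defs.v *)
From HB Require Import structures.
From mathcomp Require Import all_boot all_order all_algebra.
From mathcomp Require Import all_classical all_reals.
Set Implicit Arguments. Unset Strict Implicit. Unset Printing Implicit Defensive.
Import Order.TTheory GRing.Theory Num.Theory.
Local Open Scope ring_scope.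
Local Open Scope classical_set_scope.

Section Defs.
Variable R : realType.

Definition vnorm n (v : 'cV[R]_n) : R := Num.sqrt (\sum_i (v i 0) ^+ 2).

Definition specnorm m n (A : 'M[R]_(m, n)) : R :=
  sup [set vnorm (A *m v) | v in [set v : 'cV[R]_n | vnorm v = 1]].

Definition frob2 m n (A : 'M[R]_(m, n)) : R := \sum_i \sum_j (A i j) ^+ 2.

(* W_{hi:lo} = W hi * W (hi-1) * ... * W lo ; identity if hi < lo *)
Definition prodW d (W : nat -> 'M[R]_d) (hi lo : nat) : 'M[R]_d :=
  foldr (fun i acc => W i *m acc) 1%:M (rev (iota lo (hi.+1 - lo))).

Definition risk d (L : nat) (Phi : 'M[R]_d) (W : nat -> 'M[R]_d) : R :=
  frob2 (prodW W L 1 - Phi) / 2.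

(* gradient of the risk with respect to W_l *)
Definition grad d (L : nat) (Phi : 'M[R]_d) (W : nat -> 'M[R]_d) (l : nat)
  : 'M[R]_d :=
  (prodW W L l.+1)^T *m (prodW W L 1 - Phi) *m (prodW W l.-1 1)^T.

Definition gdstep d (L : nat) (Phi : 'M[R]_d) (eta : R) (W : nat -> 'M[R]_d)
  : nat -> 'M[R]_d := fun l => W l - eta *: grad L Phi W l.

Definition balD d (W : nat -> 'M[R]_d) (l : nat) : 'M[R]_d :=
  (W l.+1)^T *m W l.+1 - W l *m (W l)^T.

End Defs.

(* Main.v *)
Require Import Defs.
From HB Require Import structures.
From mathcomp Require Import all_boot all_order all_algebra.
From mathcomp Require Import all_classical all_reals.
From mathcomp Require Import ring lra zify.
Import Order.TTheory GRing.Theory Num.Theory.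
Set Implicit Arguments. Unset Strict Implicit. Unset Printing Implicit Defensive.
Local Open Scope ring_scope.
Local Open Scope classical_set_scope.

Section Aux.
Variable R : realType.
Implicit Types (n : nat).

Definition dot n (u v : 'cV[R]_n) : R := \sum_i u i 0 * v i 0.

Lemma dot_ge0 n (u : 'cV[R]_n) : 0 <= dot u u.
Proof. by apply: sumr_ge0 => i _; rewrite -expr2 sqr_ge0. Qed.

Lemma vnorm_sq n (u : 'cV[R]_n) : vnorm u ^+ 2 = dot u u.
Proof.
rewrite /vnorm sqr_sqrtr; last by apply: sumr_ge0 => i _; rewrite sqr_ge0.
by apply: eq_bigr => i _; rewrite expr2.
Qed.

Lemma vnorm_ge0 n (u : 'cV[R]_n) : 0 <= vnorm u.
Proof. exact: sqrtr_ge0. Qed.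

Lemma dotC n (u v : 'cV[R]_n) : dot u v = dot v u.
Proof. by apply: eq_bigr => i _; rewrite mulrC. Qed.

Lemma dot_quad n (u v : 'cV[R]_n) t :
  dot (u - t *: v) (u - t *: v) = dot u u - 2 * t * dot u v + t ^+ 2 * dot v v.
Proof.
rewrite /dot !mulr_sumr -sumrB -big_split /=.
apply: eq_bigr => i _; rewrite !mxE; ring.
Qed.

Lemma CS_sq n (u v : 'cV[R]_n) : dot u v ^+ 2 <= dot u u * dot v v.
Proof.
have [v0|vpos] := eqVneq (dot v v) 0.
  have vz : forall i, v i 0 = 0.
    move=> i; apply/eqP; rewrite -sqrf_eq0 expr2; apply/eqP.
    move/eqP: v0; rewrite /dot psumr_eq0 => [/allP H|j _]; last by rewrite -expr2 sqr_ge0.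
    by apply/eqP; apply: H; rewrite mem_index_enum.
  have -> : dot u v = 0 by rewrite /dot big1 // => i _; rewrite vz mulr0.
  by rewrite v0 mulr0 expr0n.
have vp : 0 < dot v v by rewrite lt_def vpos dot_ge0.
have := dot_ge0 (u - (dot u v / dot v v) *: v); rewrite dot_quad.
set a := dot u u; set b := dot u v; set c := dot v v => H.
have cinv : c / c = 1 by rewrite divff // gt_eqF.
have : 0 <= (a - 2 * (b / c) * b + (b / c) ^+ 2 * c) * c by rewrite mulr_ge0 // ltW.
have -> : (a - 2 * (b / c) * b + (b / c) ^+ 2 * c) * c = a * c - b^+2.
  transitivity (a * c - 2 * b * b * (c / c) + b * b * (c / c) * (c / c)); first by ring.
  rewrite cinv; ring.
by rewrite subr_ge0.
Qed.

Lemma CS n (u v : 'cV[R]_n) : dot u v <= vnorm u * vnorm v.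
Proof.
have h : `|dot u v| <= vnorm u * vnorm v.
  rewrite -ler_sqr ?nnegrE ?mulr_ge0 ?vnorm_ge0 //.
  by rewrite exprMn !vnorm_sq real_normK ?num_real // CS_sq.
exact: le_trans (ler_norm _) h.
Qed.


Lemma dotE n (u v : 'cV[R]_n) : dot u v = (u^T *m v) 0 0.
Proof. by rewrite mxE; apply: eq_bigr => i _; rewrite mxE. Qed.

Lemma dot_tr n m (A : 'M[R]_(m, n)) u v : dot u (A *m v) = dot (A^T *m u) v.
Proof. by rewrite !dotE trmx_mul trmxK mulmxA. Qed.

Lemma vnorm_eq0 n (u : 'cV[R]_n) : vnorm u = 0 -> forall i, u i 0 = 0.
Proof.
move=> h i; have : dot u u = 0 by rewrite -vnorm_sq h expr0n.
rewrite /dot => /eqP; rewrite psumr_eq0 => [/allP H|j _]; last by rewrite -expr2 sqr_ge0.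
by apply/eqP; rewrite -sqrf_eq0 expr2; apply: H; rewrite mem_index_enum.
Qed.

Lemma vnorm_add n (u v : 'cV[R]_n) : vnorm (u + v) <= vnorm u + vnorm v.
Proof.
rewrite -ler_sqr ?nnegrE ?addr_ge0 ?vnorm_ge0 // !vnorm_sq sqrrD !vnorm_sq.
have -> : dot (u + v) (u + v) = dot u u + 2 * dot u v + dot v v.
  rewrite /dot !mulr_sumr -!big_split /=; apply: eq_bigr => i _; rewrite !mxE; ring.
have := CS u v; rewrite -mulr_natr; lra.
Qed.

Lemma vnorm_scale n c (u : 'cV[R]_n) : vnorm (c *: u) = `|c| * vnorm u.
Proof.
rewrite /vnorm -sqrtr_sqr -sqrtrM ?sqr_ge0 //; congr Num.sqrt.
by rewrite mulr_sumr; apply: eq_bigr => i _; rewrite !mxE exprMn.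
Qed.

Lemma vnorm_opp n (u : 'cV[R]_n) : vnorm (- u) = vnorm u.
Proof. by rewrite -scaleN1r vnorm_scale normrN normr1 mul1r. Qed.

Definition ob m n (A : 'M[R]_(m, n)) (c : R) := forall v, vnorm (A *m v) <= c * vnorm v.

Lemma ob_mul m n p (A : 'M[R]_(m, n)) (B : 'M[R]_(n, p)) (a b : R) :
  0 <= a -> ob A a -> ob B b -> ob (A *m B) (a * b).
Proof.
move=> a0 hA hB v; rewrite -mulmxA -mulrA.
by apply: le_trans (hA _) _; rewrite ler_wpM2l.
Qed.

Lemma ob_tr m n (A : 'M[R]_(m, n)) (a : R) : 0 <= a -> ob A a -> ob A^T a.
Proof.
move=> a0 hA v; set x := vnorm (A^T *m v).
have x0 : 0 <= x by apply: vnorm_ge0.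
have h : x * x <= (a * vnorm v) * x.
  rewrite /x -expr2 vnorm_sq -dot_tr.
  apply: le_trans (CS _ _) _.
  rewrite [a * _]mulrC -mulrA ler_wpM2l ?vnorm_ge0 //.
have [->|xp] := eqVneq x 0; first by rewrite mulr_ge0 ?vnorm_ge0.
have xp' : 0 < x by rewrite lt_def xp.
by rewrite -(ler_pM2r xp').
Qed.

Lemma ob_mono m n (A : 'M[R]_(m, n)) (a b : R) : a <= b -> ob A a -> ob A b.
Proof. by move=> ab hA v; apply: le_trans (hA v) _; rewrite ler_wpM2r ?vnorm_ge0. Qed.

Lemma ob_sub m n (A B : 'M[R]_(m, n)) (a b : R) : ob A a -> ob B b -> ob (A - B) (a + b).
Proof.
move=> hA hB v; rewrite mulmxBl mulrDl.
apply: le_trans (vnorm_add _ _) _; rewrite vnorm_opp.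
exact: lerD.
Qed.

Lemma ob_scale m n (A : 'M[R]_(m, n)) (a c : R) : 0 <= c -> ob A a -> ob (c *: A) (c * a).
Proof.
move=> c0 hA v; rewrite -scalemxAl vnorm_scale ger0_norm // -mulrA.
by rewrite ler_wpM2l.
Qed.

Lemma ob_1 n : ob (1%:M : 'M[R]_n) 1.
Proof. by move=> v; rewrite mul1mx mul1r. Qed.

Lemma ob_frob m n (A : 'M[R]_(m, n)) : ob A (Num.sqrt (frob2 A)).
Proof.
move=> v; rewrite -ler_sqr ?nnegrE ?mulr_ge0 ?vnorm_ge0 ?sqrtr_ge0 //.
rewrite exprMn !vnorm_sq sqr_sqrtr; last by rewrite /frob2; apply: sumr_ge0 => i _; apply: sumr_ge0 => j _; rewrite sqr_ge0.
rewrite /dot /frob2 mulr_suml; apply: ler_sum => i _.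
have := CS_sq (row i A)^T v; rewrite /dot.
have -> : \sum_j (row i A)^T j 0 * v j 0 = (A *m v) i 0.
  by rewrite mxE; apply: eq_bigr => j _; rewrite !mxE.
rewrite -expr2; move/le_trans; apply; apply: ler_wpM2r; first exact: dot_ge0.
by rewrite le_eqVlt; apply/orP; left; apply/eqP/eq_bigr => j _; rewrite !mxE expr2.
Qed.

Lemma spec_ub m n (A : 'M[R]_(m, n)) : ob A (specnorm A).
Proof.
set S := [set vnorm (A *m v) | v in [set v : 'cV[R]_n | vnorm v = 1]].
have hS : has_ubound S.
  exists (Num.sqrt (frob2 A)) => y [v /= v1 <-].
  by have := ob_frob A v; rewrite v1 mulr1.
move=> v; have [v0|vn] := eqVneq (vnorm v) 0.
  have -> : v = 0 by apply/matrixP => i j; rewrite (ord1 j) vnorm_eq0 // mxE.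
  have vz : vnorm (0:'cV[R]_m) = 0 by rewrite /vnorm big1 ?sqrtr0 // => i _; rewrite mxE expr0n.
  have vz' : vnorm (0:'cV[R]_n) = 0 by rewrite /vnorm big1 ?sqrtr0 // => i _; rewrite mxE expr0n.
  by rewrite mulmx0 vz vz' mulr0.
have vp : 0 < vnorm v by rewrite lt_def vn vnorm_ge0.
set w := (vnorm v)^-1 *: v.
have w1 : vnorm w = 1 by rewrite vnorm_scale ger0_norm ?invr_ge0 ?(ltW vp) // mulVf.
have -> : A *m v = vnorm v *: (A *m w) by rewrite /w -scalemxAr scalerA divff ?scale1r // gt_eqF.
rewrite vnorm_scale (ger0_norm (ltW vp)) mulrC; apply: ler_wpM2r; first exact: ltW.
by apply: ub_le_sup => //; exists w.
Qed.

Lemma spec_le m n (A : 'M[R]_(m, n)) (c : R) : 0 <= c -> ob A c -> specnorm A <= c.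
Proof.
move=> c0 hA; rewrite /specnorm.
set S := [set vnorm (A *m v) | v in [set v : 'cV[R]_n | vnorm v = 1]].
have [ne|e] := pselect (S !=set0).
  apply: ge_sup => // y [v /= v1 <-]; by have := hA v; rewrite v1 mulr1.
suff -> : S = set0 by rewrite sup0.
by apply/seteqP; split => // y Sy; apply: e; exists y.
Qed.

Lemma foldr_mul d (W : nat -> 'M[R]_d) s (X : 'M[R]_d) :
  foldr (fun i acc => W i *m acc) X s = foldr (fun i acc => W i *m acc) 1%:M s *m X.
Proof. by elim: s => [|x s IH] /=; rewrite ?mul1mx // IH mulmxA. Qed.

Lemma prodW_bot d (W : nat -> 'M[R]_d) hi lo :
  (lo <= hi)%N -> prodW W hi lo = prodW W hi lo.+1 *m W lo.
Proof.
rewrite /prodW => h; have -> : (hi.+1 - lo = (hi.+1 - lo.+1).+1)%N by lia.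
by rewrite /= rev_cons foldr_rcons foldr_mul mulmx1.
Qed.

Lemma prodW_top d (W : nat -> 'M[R]_d) hi lo :
  (lo <= hi)%N -> (0 < hi)%N -> prodW W hi lo = W hi *m prodW W hi.-1 lo.
Proof.
rewrite /prodW => h h0; have -> : (hi.+1 - lo = (hi.-1.+1 - lo) + 1)%N by lia.
rewrite iotaD rev_cat /=.
by have -> : (lo + (hi.-1.+1 - lo) = hi)%N by lia.
Qed.

Lemma prodW_nil d (W : nat -> 'M[R]_d) hi lo : (hi < lo)%N -> prodW W hi lo = 1%:M.
Proof. by rewrite /prodW => h; have -> : (hi.+1 - lo = 0)%N by lia. Qed.

Lemma ob_prodW d (W : nat -> 'M[R]_d) hi lo (a : R) : 0 <= a ->
  (forall i, (lo <= i <= hi)%N -> ob (W i) a) -> ob (prodW W hi lo) (a ^+ (hi.+1 - lo)).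
Proof.
move=> a0 hW; rewrite /prodW.
case: (leqP lo hi.+1) => hl; last first.
  have -> : (hi.+1 - lo = 0)%N by lia.
  exact: ob_1.
suff : forall k lo', (lo <= lo')%N -> (lo' + k <= hi.+1)%N ->
  ob (foldr (fun i acc => W i *m acc) 1%:M (rev (iota lo' k))) (a ^+ k).
  by apply; lia.
elim=> [|k IH] lo' h1 h2 /=; first exact: ob_1.
rewrite rev_cons foldr_rcons foldr_mul mulmx1 exprSr.
apply: ob_mul; first exact: exprn_ge0.
  by apply: IH; lia.
by apply: hW; lia.
Qed.

Lemma balance_id d (X Y G1 G0 : 'M[R]_d) (eta : R) :
  X^T *m G1 = G0 *m Y^T ->
  (X - eta *: G1)^T *m (X - eta *: G1) - (Y - eta *: G0) *m (Y - eta *: G0)^T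
   - (X^T *m X - Y *m Y^T) = eta ^+ 2 *: (G1^T *m G1 - G0 *m G0^T).
Proof.
move=> H.
have H2 : G1^T *m X = Y *m G0^T by rewrite -[G1^T *m X]trmxK trmx_mul trmxK H trmx_mul trmxK.
rewrite !linearB /= !linearZ /= !scalerN !mulmxDl !mulNmx -!scalemxAl H H2.
apply/matrixP => i j; rewrite !mxE; ring.
Qed.

End Aux.
Local Close Scope classical_set_scope.

Theorem lemma9 (R : realType) (d L : nat) (Phi : 'M[R]_d)
  (W : nat -> 'M[R]_d) (alpha beta phi eta : R) :
  (1 <= d)%N -> (2 <= L)%N ->
  0 <= alpha -> 0 <= beta -> 0 < phi ->
  (forall l : nat, (1 <= l <= L - 1)%N -> specnorm (W l) <= alpha) ->
  specnorm (W L) <= beta ->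
  1 <= alpha ^+ (2 * (L - 1)) ->
  alpha ^+ (2 * (L - 1)) < L%:R * phi ^+ 2 ->
  alpha ^+ (2 * (L - 1)) * beta ^+ 2 < 2 * phi ^+ 2 ->
  0 < eta ->
  (forall l : nat, (1 <= l <= L - 2)%N ->
     specnorm (balD (gdstep L Phi eta W) l - balD W l)
       <= 8 * eta ^+ 2 * phi ^+ 2 * risk L Phi W) /\
  specnorm (balD (gdstep L Phi eta W) (L - 1) - balD W (L - 1))
    <= 2 * eta ^+ 2 * (L + 2)%:R * phi ^+ 2 * risk L Phi W.
Proof.
move=> d1 L2 a0 b0 phi0 hWa hWb ha1 haL hab eta0.
set E := prodW W L 1 - Phi.
set e := Num.sqrt (frob2 E).
have e0 : 0 <= e by apply: sqrtr_ge0.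
have e2 : e ^+ 2 = 2 * risk L Phi W.
  rewrite /e /risk -/E sqr_sqrtr; last by rewrite /frob2; apply: sumr_ge0 => i _; apply: sumr_ge0 => j _; rewrite sqr_ge0.
  by rewrite mulrC divfK // pnatr_eq0.
have obW : forall l, (1 <= l <= L - 1)%N -> ob (W l) alpha.
  by move=> l hl; apply: ob_mono (hWa l hl) (spec_ub _).
have obWL : ob (W L) beta by apply: ob_mono hWb (spec_ub _).
have alpha1 : 1 <= alpha.
  case: (ltrP alpha 1) => // h; have := exprn_ilt1 (2 * (L - 1)) a0 h.
  have -> : (2 * (L - 1) != 0)%N by lia.
  by move=> h2; have := lt_le_trans h2 ha1; rewrite ltxx.
have ob_low : forall l, (1 <= l <= L)%N -> ob (prodW W l.-1 1) (alpha ^+ l.-1).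
  move=> l hl.
  have h : ob (prodW W l.-1 1) (alpha ^+ (l.-1.+1 - 1)) by apply: ob_prodW => // i hi; apply: obW; lia.
  by rewrite (_ : (l.-1.+1 - 1 = l.-1)%N) in h; last lia.
have ob_high : forall l, (1 <= l <= L - 1)%N -> ob (prodW W L l.+1) (beta * alpha ^+ (L - l.+1)).
  move=> l hl; rewrite (@prodW_top _ _ _ L l.+1); [|lia|lia].
  apply: ob_mul => //.
  have h : ob (prodW W L.-1 l.+1) (alpha ^+ (L.-1.+1 - l.+1)) by apply: ob_prodW => // i hi; apply: obW; lia.
  by rewrite (_ : (L.-1.+1 - l.+1 = L - l.+1)%N) in h; last lia.
have gmid : forall l, (1 <= l <= L - 1)%N -> ob (grad L Phi W l) (beta * alpha ^+ (L - 2) * e).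
  move=> l hl; rewrite /grad.
  have -> : beta * alpha ^+ (L - 2) * e = beta * alpha ^+ (L - l.+1) * e * alpha ^+ l.-1.
    have -> : (L - 2 = (L - l.+1) + l.-1)%N by lia.
    by rewrite exprD; ring.
  apply: ob_mul; first by rewrite !mulr_ge0 ?exprn_ge0.
    apply: ob_mul; first by rewrite !mulr_ge0 ?exprn_ge0.
      by apply: ob_tr; [rewrite !mulr_ge0 ?exprn_ge0 | apply: ob_high].
    exact: ob_frob.
  by apply: ob_tr; [rewrite exprn_ge0 | apply: ob_low; lia].
have gtop : ob (grad L Phi W L) (e * alpha ^+ (L - 1)).
  rewrite /grad (@prodW_nil _ _ W L L.+1) //.
  have -> : e * alpha ^+ (L - 1) = 1 * e * alpha ^+ L.-1 by rewrite mul1r; congr (_ * _ ^+ _); lia.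
  apply: ob_mul; first by rewrite mul1r.
    apply: ob_mul => //; last exact: ob_frob.
    by apply: ob_tr => //; apply: ob_1.
  by apply: ob_tr; [rewrite exprn_ge0 | apply: ob_low; lia].
have key : forall l g1 g0, (1 <= l <= L - 1)%N -> 0 <= g1 -> 0 <= g0 ->
    ob (grad L Phi W l.+1) g1 -> ob (grad L Phi W l) g0 ->
    specnorm (balD (gdstep L Phi eta W) l - balD W l) <= eta ^+ 2 * (g1 * g1 + g0 * g0).
  move=> l g1 g0 hl g10 g00 h1 h0.
  have comm : (W l.+1)^T *m grad L Phi W l.+1 = grad L Phi W l *m (W l)^T.
    have hb : prodW W L l.+2 *m W l.+1 = prodW W L l.+1 by symmetry; apply: prodW_bot; clear -hl L2; lia.
    have ht : W l *m prodW W l.-1 1 = prodW W l 1 by symmetry; apply: prodW_top; clear -hl L2; lia.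
    have t1 : (prodW W L l.+2 *m W l.+1)^T = (W l.+1)^T *m (prodW W L l.+2)^T by rewrite trmx_mul.
    have t2 : forall M : 'M[R]_d, M *m (W l *m prodW W l.-1 1)^T = M *m (prodW W l.-1 1)^T *m (W l)^T.
      by move=> M; rewrite trmx_mul mulmxA.
    by rewrite /grad /= !mulmxA -t1 hb -t2 ht.
  rewrite /balD /gdstep balance_id //.
  apply: spec_le.
    by apply: mulr_ge0; [apply: exprn_ge0; exact: ltW | apply: addr_ge0; exact: mulr_ge0].
  apply: ob_scale; first by apply: exprn_ge0; exact: ltW.
  apply: ob_sub; apply: ob_mul => //; exact: ob_tr.
set r := risk L Phi W.
have r0 : 0 <= r.
  have h := sqr_ge0 e; rewrite e2 in h.
  by rewrite -(pmulr_rge0 _ (ltr0n _ 2)) /=.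
set x := alpha ^+ (L - 1); set y := alpha ^+ (L - 2).
have hx2 : alpha ^+ (2 * (L - 1)) = x ^+ 2 by rewrite mulnC exprM.
rewrite hx2 in haL hab.
have y0 : 0 <= y by apply: exprn_ge0.
have yx : y <= x by apply: ler_weXn2l => //; clear -L2; lia.
have hb2 : beta ^+ 2 * y ^+ 2 <= 2 * phi ^+ 2.
  apply: le_trans (ltW hab); rewrite mulrC; apply: ler_wpM2r; first exact: sqr_ge0.
  by rewrite !expr2; apply: ler_pM.
have hg : (beta * y * e) * (beta * y * e) <= 4 * phi ^+ 2 * r.
  have -> : (beta * y * e) * (beta * y * e) = beta ^+ 2 * y ^+ 2 * e ^+ 2 by ring.
  rewrite e2; have -> : 4 * phi ^+ 2 * r = 2 * phi ^+ 2 * (2 * r) by ring.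
  by apply: ler_wpM2r => //; rewrite mulr_ge0.
have eta2 : 0 <= eta ^+ 2 by apply: exprn_ge0; exact: ltW.
have g0 : 0 <= beta * y * e by rewrite !mulr_ge0.
split.
  move=> l hl.
  apply: le_trans (key l _ _ _ g0 g0 (gmid l.+1 _) (gmid l _)) _;
    [clear -hl L2; lia | clear -hl L2; lia | clear -hl L2; lia |].
  have -> : 8 * eta ^+ 2 * phi ^+ 2 * r = eta ^+ 2 * (4 * phi ^+ 2 * r + 4 * phi ^+ 2 * r) by ring.
  by apply: ler_wpM2l => //; apply: lerD.
have gtop' : ob (grad L Phi W (L - 1)%N.+1) (e * x).
  by rewrite (_ : ((L - 1).+1 = L)%N); [exact: gtop | clear -L2; lia].
have hL1 : (0 < L - 1 <= L - 1)%N by clear -L2; lia.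
have ex0 : 0 <= e * x by rewrite mulr_ge0 ?exprn_ge0.
have K := key (L - 1)%N (e * x) (beta * y * e) hL1 ex0 g0 gtop' (gmid (L - 1)%N hL1).
apply: le_trans K _.
have hx : (e * x) * (e * x) <= 2 * L%:R * phi ^+ 2 * r.
  have -> : (e * x) * (e * x) = x ^+ 2 * e ^+ 2 by ring.
  rewrite e2; have -> : 2 * L%:R * phi ^+ 2 * r = L%:R * phi ^+ 2 * (2 * r) by ring.
  by apply: ler_wpM2r; [rewrite mulr_ge0 | exact: ltW].
have -> : 2 * eta ^+ 2 * (L + 2)%:R * phi ^+ 2 * r =
  eta ^+ 2 * (2 * L%:R * phi ^+ 2 * r + 4 * phi ^+ 2 * r) by rewrite natrD; ring.
by apply: ler_wpM2l => //; apply: lerD.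
Qed.
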